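(* Let $\tau$ be a triangle function on $\Delta^+$ and $\gamma$ a $\sigma$-additive $\tau$-decomposable measure on a $\sigma$-ring $\Sigma$ of subsets of $\Omega\ne\emptyset$. If $E_n\in\Sigma$, $E_n\subseteq E_{n+1}$ for all $n$ and $\bigcup_n E_n=E$, then $\gamma_{E_n}\to\gamma_E$ weakly; i.e., $\gamma$ is continuous from below.
   Context: $\Delta^+$: functions $F:[-\infty,+\infty]\to[0,1]$ non-decreasing, left-continuous on $\mathbb{R}$, $F(x)=0$ for $x\le0$, $F(+\infty)=1$; $\varepsilon_0(x)=1$ if $x>0$, else $0$. A triangle function is a symmetric, associative map $\tau:\Delta^+\times\Delta^+\to\Delta^+$, non-decreasing in each variable, with identity $\varepsilon_0$; $\bigoplus_{k=1}^nG_k=\tau(G_1,\bigoplus_{k=2}^nG_k)$. Weak convergence: $G_n\to G$ iff $G_n(x)\to G(x)$ at every $x\in\mathbb{R}$ where $G$ is continuous; $\bigoplus_{n=1}^\infty G_n:=\lim_{n\to\infty}\bigoplus_{k=1}^nG_k$ (weak limit). A $\tau$-decomposable measure on a ring $\Sigma$ is $\gamma:\Sigma\to\Delta^+$ with $\gamma_\emptyset=\varepsilon_0$ and $\gamma_{E\cup F}=\tau(\gamma_E,\gamma_F)$ for disjoint $E,F\in\Sigma$. It is $\sigma$-additive (on a $\sigma$-ring) if $\gamma_{\bigcup_{n}E_n}=\bigoplus_{n=1}^\infty\gamma_{E_n}$ for every sequence of pairwise disjoint $E_n\in\Sigma$. It is continuous from below if $\gamma_{E_n}\to\gamma_E$ weakly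 whenever $E_n\subseteq E_{n+1}$, $\bigcup E_n=E$ in $\Sigma$. *)

(* Defs.v *)
From HB Require Import structures.
From mathcomp Require Import all_boot all_order all_algebra.
From mathcomp Require Import all_classical all_reals all_analysis.
Set Implicit Arguments. Unset Strict Implicit. Unset Printing Implicit Defensive.
Import Order.TTheory GRing.Theory Num.Theory.
Import numFieldNormedType.Exports.
Local Open Scope classical_set_scope.
Local Open Scope ring_scope.

(* Elements of Delta^+ are represented by their restriction to R: the values
   at -oo and +oo are forced to be 0 and 1 respectively. *)
Definition dplus (R : realType) (F : R -> R) : Prop :=
  [/\ (forall x, 0 <= F x <= 1),
      (forall x y, x <= y -> F x <= F y),
      (forall x, F y @[y --> x^'-] --> F x)
    & (forall x, x <= 0 -> F x = 0)].

Definition eps0 (R : realType) : R -> R := fun x => if 0 < x then 1 else 0.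

Definition dle (R : realType) (F G : R -> R) : Prop := forall x, F x <= G x.

Definition triangle_function (R : realType) (tau : (R -> R) -> (R -> R) -> (R -> R)) : Prop :=
  [/\ (forall F G, dplus F -> dplus G -> dplus (tau F G)),
      (forall F G, dplus F -> dplus G -> tau F G = tau G F),
      (forall F G H, dplus F -> dplus G -> dplus H -> tau F (tau G H) = tau (tau F G) H),
      ((forall F F' G, dplus F -> dplus F' -> dplus G -> dle F F' -> dle (tau F G) (tau F' G)) /\
       (forall F G G', dplus F -> dplus G -> dplus G' -> dle G G' -> dle (tau F G) (tau F G')))
    & (forall F, dplus F -> tau F (@eps0 R) = F)].

(* tsum tau G n = G 0 (+) (G 1 (+) ( ... (+) G n)), right-nested as in
   \bigoplus_{k=1}^n G_k = tau(G_1, \bigoplus_{k=2}^n G_k) (0-indexed) *)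
Definition tsum (R : realType) (tau : (R -> R) -> (R -> R) -> (R -> R))
  (G : nat -> R -> R) (n : nat) : R -> R :=
  foldr (fun k acc => tau (G k) acc) (G n) (iota 0 n).

Definition weak_conv (R : realType) (Gn : nat -> R -> R) (G : R -> R) : Prop :=
  forall x : R, {for x, continuous G} -> (fun n => Gn n x) @ \oo --> G x.

Definition is_sigma_ring (Omega : Type) (S : set (set Omega)) : Prop :=
  [/\ S set0,
      (forall A B, S A -> S B -> S (A `\` B))
    & (forall A : nat -> set Omega, (forall n, S (A n)) -> S (\bigcup_n A n))].

Definition tau_decomposable (R : realType) (Omega : Type)
  (tau : (R -> R) -> (R -> R) -> (R -> R)) (S : set (set Omega))
  (gamma : set Omega -> R -> R) : Prop :=
  [/\ (forall E, S E -> dplus (gamma E)),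
      gamma set0 = @eps0 R
    & (forall E F, S E -> S F -> E `&` F = set0 -> gamma (E `|` F) = tau (gamma E) (gamma F))].

Definition tau_sigma_additive (R : realType) (Omega : Type)
  (tau : (R -> R) -> (R -> R) -> (R -> R)) (S : set (set Omega))
  (gamma : set Omega -> R -> R) : Prop :=
  forall E : nat -> set Omega, (forall n, S (E n)) ->
    (forall m n, m <> n -> E m `&` E n = set0) ->
    weak_conv (tsum tau (fun n => gamma (E n))) (gamma (\bigcup_n E n)).

(* Main.v *)
Require Import Defs.
From mathcomp Require Import all_boot all_order all_algebra.
From mathcomp Require Import all_classical all_reals all_analysis.
From mathcomp Require Import zify.
Local Open Scope classical_set_scope.

Theorem lemma3p4 (R : realType) (Omega : Type) (omega0 : Omega)
  (tau : (R -> R) -> (R -> R) -> (R -> R)) (S : set (set Omega))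
  (gamma : set Omega -> R -> R) :
  triangle_function tau -> is_sigma_ring S ->
  tau_decomposable tau S gamma -> tau_sigma_additive tau S gamma ->
  forall (En : nat -> set Omega) (E : set Omega),
    (forall n, S (En n)) -> (forall n, En n `<=` En n.+1) ->
    \bigcup_n En n = E ->
    weak_conv (fun n => gamma (En n)) (gamma E).
Proof.
move=> _ [S0 SD SU] [_ _ gU] gadd En E SE incr <-.
have mono : forall m j, (m <= j)%N -> En m `<=` En j.
  move=> m j; elim: j => [|j IH]; first by rewrite leqn0 => /eqP ->.
  rewrite leq_eqVlt => /orP [/eqP -> //|].
  by rewrite ltnS => /IH h x /h; apply: incr.
pose prev m := if m is m'.+1 then En m' else set0.
have Sprev : forall m, S (prev m) by case.
pose D m := En m `\` prev m.
pose U m j := En j `\` prev m.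
have SDm : forall m, S (D m) by move=> m; apply: SD.
have SUm : forall m j, S (U m j) by move=> m j; apply: SD.
have key : forall k m, foldr (fun i acc => tau (gamma (D i)) acc)
    (gamma (D (m + k)%N)) (iota m k) = gamma (U m (m + k)%N).
  elim=> [|k IH] m; first by rewrite addn0.
  rewrite /= -addSnnS IH -gU //.
    congr gamma; rewrite /U /D /=.
    have h1 : En m `<=` En (m.+1 + k)%N by apply: mono; lia.
    have h2 : prev m `<=` En m.
      case: (m) => [|m'] x /=; first by []. exact: incr.
    apply/seteqP; split => x /=.
      case=> [[a b]|[a b]]; split.
      - exact: h1.
      - exact: b.
      - exact: a.
      - by move=> /h2.
    case=> a b; have [c|c] := pselect (En m x); [by left|by right].
  apply/seteqP; split => x //= [[a b] [c d]]; exact: d.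
have hts : forall n, tsum tau (fun n => gamma (D n)) n = gamma (En n).
  by move=> n; rewrite /tsum -{1}(add0n n) key /U /= setD0.
have disj : forall m n, m <> n -> D m `&` D n = set0.
  suff h : forall m n, (m < n)%N -> D m `&` D n = set0.
    move=> m n /eqP; rewrite neq_ltn => /orP [/h //|/h]; by rewrite setIC.
  move=> m [|n] // mn; apply/seteqP; split => x //= [[a _] [_ c]].
  by apply: c; apply: (mono m n) => //; lia.
have cup : \bigcup_n D n = \bigcup_n En n.
  apply/seteqP; split => x /=.
    by case=> n _ [a _]; exists n.
  case=> n _; elim: n => [|n IH] h.
    by exists 0%N => //; split.
  have [c|c] := pselect (En n x); first exact: IH.
  by exists n.+1 => //; split.
have -> : (fun n => gamma (En n)) = tsum tau (fun n => gamma (D n)).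
  by apply: funext => n; rewrite hts.
by move: (gadd D SDm disj); rewrite cup.
Qed.
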